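(* Let $u(x)=\dfrac{2}{f(x)}\exp\left(-\dfrac{x f(x)+x^2}{2}\right)$ for $0<x\le 1$. Then $u(x)<\sqrt{\pi/2}$ for all $x\in(0,1]$.
   Context: For $x\in(0,1]$, $f(x)$ denotes the unique number $y\in[1,\infty)$ with $x e^{-x^2/2}=y e^{-y^2/2}$ (this is well defined since $t\mapsto te^{-t^2/2}$ is strictly increasing on $(0,1)$, strictly decreasing on $(1,\infty)$ and tends to $0$ at $+\infty$). *)

(* Defs.v *)
From Stdlib Require Import Reals Lra ClassicalEpsilon.
Open Scope R_scope.

Definition g (t : R) : R := t * exp (- t ^ 2 / 2).

(* f(x) := the unique y in [1, +oo) with g x = g y (chosen by Hilbert's
   epsilon; the paper's well-definedness guarantees this is that y for x in (0,1]). *)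
Definition f (x : R) : R :=
  epsilon (inhabits 1) (fun y => 1 <= y /\ g x = g y).

Definition u (x : R) : R :=
  2 / f x * exp (- (x * f x + x ^ 2) / 2).

(* Main.v *)
Require Import Defs.
From Stdlib Require Import Reals.
From Stdlib Require Import Lra ClassicalEpsilon.
Open Scope R_scope.

Lemma PI_gt : PI > 3.125.
Proof.
  pose proof PI_4. pose proof PI_RGT_0.
  assert (Hc := COS (PI/2) ltac:(lra) ltac:(lra)). destruct Hc as [Hl _].
  rewrite cos_PI2 in Hl. unfold cos_lb, cos_approx in Hl. simpl in Hl.
  unfold cos_term in Hl. simpl in Hl.
  set (a := PI/2) in *.
  assert (Ha : PI = 2 * a) by (unfold a; lra).
  clearbody a. rewrite Ha in *.
  field_simplify in Hl.
  destruct (Rlt_or_le 1.5625 a) as [|Hle]; [lra|exfalso].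
  set (b := a^2) in *.
  assert (a^6 = b^3) by (unfold b; ring). assert (a^4 = b^2) by (unfold b; ring).
  rewrite H1, H2 in Hl.
  assert (0 < b <= 2.44140625) by (unfold b; split; nra).
  clearbody b.
  nra.
Qed.

Lemma sqrt_gt : 5/4 < sqrt (PI/2).
Proof.
  pose proof PI_gt.
  destruct (Rlt_or_le (5/4) (sqrt (PI/2))) as [|Hle]; [assumption|exfalso].
  pose proof (sqrt_sqrt (PI/2) ltac:(lra)). pose proof (sqrt_pos (PI/2)).
  nra.
Qed.

Lemma exp_n : forall n a, exp (INR n * a) = exp a ^ n.
Proof.
  induction n; intros a.
  - simpl. rewrite Rmult_0_l. apply exp_0.
  - rewrite S_INR. replace ((INR n + 1) * a) with (INR n * a + a) by ring.
    rewrite exp_plus, IHn. simpl. ring.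
Qed.

Lemma exp_lb : forall n a, 0 <= a -> (1 + a) ^ n <= exp (INR n * a).
Proof.
  intros n a Ha. rewrite exp_n. apply pow_incr. split. lra.
  pose proof (exp_ineq1_le a). lra.
Qed.

Lemma exp_ub : forall n a, 0 <= a < 1 -> exp (INR n * a) <= (/ (1 - a)) ^ n.
Proof.
  intros n a Ha. rewrite exp_n. apply pow_incr. split.
  - left; apply exp_pos.
  - pose proof (exp_ineq1_le (-a)). rewrite exp_Ropp in H.
    pose proof (exp_pos a).
    apply Rmult_le_reg_l with (1 - a). lra.
    rewrite Rinv_r by lra.
    apply Rmult_le_reg_r with (/ exp a). apply Rinv_0_lt_compat; lra.
    rewrite Rmult_assoc, Rinv_r, Rmult_1_l, Rmult_1_r by lra. lra.
Qed.

Lemma g_dec : forall a b, 1 <= a -> a <= b -> g b <= g a.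
Proof.
  intros a b Ha Hab. unfold g.
  assert (E : exp (- a ^ 2 / 2) = exp (- b ^ 2 / 2) * exp ((b^2 - a^2)/2)).
  { rewrite <- exp_plus. f_equal. field. }
  rewrite E.
  pose proof (exp_ineq1_le ((b^2 - a^2)/2)).
  pose proof (exp_pos (- b ^ 2 / 2)).
  assert (b <= a * (1 + (b ^ 2 - a ^ 2) / 2)).
  { assert (0 <= (b - a) * (a * (a + b) / 2 - 1)) by (apply Rmult_le_pos; nra). nra. }
  assert (b <= a * exp ((b ^ 2 - a ^ 2) / 2)) by nra.
  nra.
Qed.

Lemma g_le1 : forall x, 0 < x <= 1 -> g x <= g 1.
Proof.
  intros x Hx. unfold g.
  assert (E : exp (- 1 ^ 2 / 2) = exp (- x ^ 2 / 2) * exp ((x^2 - 1)/2)).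
  { rewrite <- exp_plus. f_equal. field. }
  rewrite E.
  pose proof (exp_ineq1_le ((x^2 - 1)/2)).
  pose proof (exp_pos (- x ^ 2 / 2)).
  assert (x <= exp ((x ^ 2 - 1) / 2)) by nra.
  nra.
Qed.

Lemma g_cont : continuity g.
Proof. unfold g. reg. Qed.

Lemma f_spec : forall x, 0 < x <= 1 -> 1 <= Defs.f x /\ g x = g (Defs.f x).
Proof.
  intros x Hx. unfold Defs.f. apply epsilon_spec.
  assert (Hgx : 0 < g x) by (unfold g; pose proof (exp_pos (- x ^ 2 / 2)); nra).
  set (Y := Rmax 1 (2 / g x)).
  assert (HY1 : 1 <= Y) by apply Rmax_l.
  assert (HY2 : 2 / g x <= Y) by apply Rmax_r.
  assert (HgY : g Y <= g x).
  { assert (2 <= Y * g x).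
    { apply Rmult_le_compat_r with (r := g x) in HY2; [|lra].
      unfold Rdiv in HY2. rewrite Rmult_assoc, Rinv_l in HY2 by lra. lra. }
    assert (HE : g Y * exp (Y^2/2) = Y).
    { unfold g. rewrite Rmult_assoc, <- exp_plus.
      replace (- Y ^ 2 / 2 + Y ^ 2 / 2) with 0 by field. rewrite exp_0; ring. }
    assert (0 < g Y) by (unfold g; pose proof (exp_pos (- Y ^ 2 / 2)); nra).
    pose proof (exp_ineq1_le (Y ^ 2 / 2)).
    assert (g Y * (1 + Y^2/2) <= Y) by nra.
    assert (g Y * Y <= 2) by nra.
    nra. }
  destruct (IVT_cor (fun t => g t - g x) 1 Y) as [z [Hz Hgz]].
  - apply continuity_minus. apply g_cont. apply continuity_const. intros a b; reflexivity.
  - exact HY1.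
  - pose proof (g_le1 x Hx). nra.
  - exists z. split. lra. lra.
Qed.

Lemma exp_le_mono : forall a b, a <= b -> exp a <= exp b.
Proof.
  intros a b H. destruct H as [H|H]. left; apply exp_increasing; auto.
  subst; lra.
Qed.

Lemma exp_prod1 : forall a b, a + b <= 0 -> exp a * exp b <= 1.
Proof.
  intros a b H. rewrite <- exp_plus, <- exp_0. apply exp_le_mono; lra.
Qed.

Theorem lemma3p4 : forall x : R, 0 < x <= 1 -> u x < sqrt (PI / 2).
Proof.
  intros x Hx. pose proof sqrt_gt.
  destruct (f_spec x Hx) as [Hy1 Hg]. unfold u.
  set (y := Defs.f x) in *. clearbody y.
  apply Rle_lt_trans with (5/4); [|lra].
  set (E := exp (- (x * y + x ^ 2) / 2)).
  assert (He : 0 < E) by apply exp_pos.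
  assert (Hiy : 0 < / y <= 1).
  { split. apply Rinv_0_lt_compat; lra.
    rewrite <- Rinv_1. apply Rinv_le_contravar; lra. }
  unfold Rdiv. rewrite Rmult_assoc.
  destruct (Rle_or_lt (3/5) x) as [HA|HxB].
  -
    assert (Hexp : 1.6 < exp 0.48).
    { replace 0.48 with (INR 16 * 0.03) by (simpl; lra).
      eapply Rlt_le_trans; [|apply exp_lb; lra]. simpl; lra. }
    assert (E1 : E * exp 0.48 <= 1) by (apply exp_prod1; nra).
    assert (E * 1.6 <= 1) by nra.
    nra.
  - destruct (Rle_or_lt x 0.38) as [HC|HB].
    +
      assert (Hy : 1.6 <= y).
      { destruct (Rlt_or_le y 1.6) as [Hlt|]; [exfalso|lra].
        pose proof (g_dec y 1.6 Hy1 ltac:(lra)) as Hd.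
        rewrite <- Hg in Hd.
        assert (Hgx : g x <= x).
        { unfold g. assert (exp (- x ^ 2 / 2) <= 1).
          { rewrite <- exp_0. apply exp_le_mono. nra. }
          nra. }
        assert (Hu : exp 1.28 < 4.2).
        { replace 1.28 with (INR 8 * 0.16) by (simpl; lra).
          eapply Rle_lt_trans; [apply exp_ub; lra|]. simpl; lra. }
        assert (H1 : exp (- 1.6 ^ 2 / 2) * exp 1.28 = 1).
        { rewrite <- exp_plus, <- exp_0. f_equal. simpl; lra. }
        assert (Hk : g 1.6 <= 0.38) by lra.
        unfold g in Hk.
        pose proof (exp_pos (- 1.6 ^ 2 / 2)). pose proof (exp_pos 1.28).
        assert (1.6 * exp (- 1.6 ^ 2 / 2) * exp 1.28 <= 0.38 * exp 1.28)
          by (apply Rmult_le_compat_r; lra).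
        nra. }
      assert (E <= 1).
      { unfold E. rewrite <- exp_0. apply exp_le_mono. nra. }
      assert (/ y <= / 1.6) by (apply Rinv_le_contravar; lra).
      nra.
    +
      assert (Hy : 1.2 <= y).
      { destruct (Rlt_or_le y 1.2) as [Hlt|]; [exfalso|lra].
        pose proof (g_dec y 1.2 Hy1 ltac:(lra)) as Hd.
        rewrite <- Hg in Hd. unfold g in Hd.
        set (A := exp (- x ^ 2 / 2)) in *.
        set (B := exp (- 1.2 ^ 2 / 2)) in *.
        set (P := exp 0.07). set (Q := exp 0.65).
        assert (H1 : A * P <= 1) by (apply exp_prod1; nra).
        assert (H2 : B * P * Q = 1).
        { unfold B, P, Q. rewrite <- !exp_plus, <- exp_0. f_equal. simpl; lra. }
        assert (HQ : Q < 2).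
        { unfold Q. replace 0.65 with (INR 8 * 0.08125) by (simpl; lra).
          eapply Rle_lt_trans; [apply exp_ub; lra|]. simpl; lra. }
        assert (0 < A) by apply exp_pos. assert (0 < P) by apply exp_pos.
        assert (0 < Q) by apply exp_pos.
        assert (HxA : x * A < 0.6 * A) by nra.
        assert (1.2 * B * (P * Q) <= 0.6 * A * (P * Q)) by
          (apply Rmult_le_compat_r; nra).
        assert (0.6 * A * (P * Q) <= 0.6 * Q) by nra.
        nra. }
      assert (Hexp : 4/3 < exp 0.3).
      { replace 0.3 with (INR 8 * 0.0375) by (simpl; lra).
        eapply Rlt_le_trans; [|apply exp_lb; lra]. simpl; lra. }
      assert (E1 : E * exp 0.3 <= 1) by (apply exp_prod1; nra).
      assert (E * (4/3) <= 1) by nra.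
      assert (/ y <= / 1.2) by (apply Rinv_le_contravar; lra).
      nra.
Qed.
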